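(* Let $D$ and $Y$ be random variables with finite supports $\mathcal{D}$ and $\mathcal{Y}$ and joint distribution $p_{D,Y}$. Define $P_c(D|Y)=\sum_{y\in\mathcal{Y}}p_Y(y)\max_{d\in\mathcal{D}}p_{D|Y}(d|y)$ (the maximum probability of correctly guessing $D$ from $Y$ over all estimators $\hat D$ with $D\to Y\to\hat D$), $p_D^*=\max_{d\in\mathcal{D}}p_D(d)$, and $\mathsf{Adv}(D|Y)=P_c(D|Y)/p_D^*$. Let $\epsilon\ge 0$. If $\mathsf{Adv}(D|Y)>1+\epsilon$, then for any probability distribution $p_{Y_T}$ on $\mathcal{Y}$ there exist $y\in\mathcal{Y}$ and $d\in\mathcal{D}$ such that \[ \left|\frac{p_{Y|D}(y|d)}{p_{Y_T}(y)}-1\right|>\epsilon. \] *)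

(* Defs.v *)
From mathcomp Require Import all_boot all_order all_algebra.
Set Implicit Arguments. Unset Strict Implicit. Unset Printing Implicit Defensive.
Import Order.TTheory GRing.Theory Num.Theory.
Local Open Scope ring_scope.

Section Defs.
Variables (R : realFieldType) (D Y : finType).

Definition is_joint_distr (p : D -> Y -> R) : Prop :=
  (forall d y, 0 <= p d y) /\ \sum_(d : D) \sum_(y : Y) p d y = 1.

Definition is_distr (q : Y -> R) : Prop :=
  (forall y, 0 <= q y) /\ \sum_(y : Y) q y = 1.

Definition pD (p : D -> Y -> R) (d : D) : R := \sum_(y : Y) p d y.
Definition pY (p : D -> Y -> R) (y : Y) : R := \sum_(d : D) p d y.

Definition pDgY (p : D -> Y -> R) (d : D) (y : Y) : R := p d y / pY p y.
Definition pYgD (p : D -> Y -> R) (y : Y) (d : D) : R := p d y / pD p d.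

(* maximum over D of nonnegative values (D nonempty whenever p is a distribution) *)
Definition maxD (f : D -> R) : R := \big[Num.max/0]_(d : D) f d.

Definition Pc (p : D -> Y -> R) : R :=
  \sum_(y : Y) pY p y * maxD (fun d => pDgY p d y).

Definition pDstar (p : D -> Y -> R) : R := maxD (pD p).

Definition Adv (p : D -> Y -> R) : R := Pc p / pDstar p.

(* | a / b - 1 | > eps, with the convention a/0 = +oo for a > 0 and
   0/0 treated as not deviating. *)
Definition ratio_deviates (eps a b : R) : Prop :=
  if 0 < b then eps < `|a / b - 1| else 0 < a.

End Defs.

(* Main.v *)
Require Import Defs.
From mathcomp Require Import all_boot all_order all_algebra.
From Stdlib Require Import Classical.
Import Order.TTheory GRing.Theory Num.Theory.
Local Open Scope ring_scope.

Lemma maxD_le (R : realFieldType) (D : finType) (f : D -> R) c :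
  0 <= c -> (forall d, f d <= c) -> maxD f <= c.
Proof.
move=> c0 H; rewrite /maxD; apply: (big_ind (fun x => x <= c)) => //.
by move=> x y hx hy; rewrite ge_max hx hy.
Qed.

Lemma le_maxD (R : realFieldType) (D : finType) (f : D -> R) d :
  f d <= maxD f.
Proof. by rewrite /maxD (bigD1 d) //= le_max lexx. Qed.

Theorem proposition2 (R : realFieldType) (D Y : finType) (p : D -> Y -> R)
    (eps : R) :
  is_joint_distr p ->
  (forall d, 0 < pD p d) ->
  (forall y, 0 < pY p y) ->
  0 <= eps ->
  1 + eps < Adv p ->
  forall q : Y -> R, is_distr q ->
  exists (y : Y) (d : D), ratio_deviates eps (pYgD p y d) (q y).
Proof.
move=> [p0 p1] pDpos pYpos eps0 hAdv q [q0 q1].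
apply: NNPP => Hn.
have Hy : forall y d, ~ ratio_deviates eps (pYgD p y d) (q y).
  by move=> y d H; apply: Hn; exists y, d.
have [d0 _ | D0] := pickP (@predT D); last first.
  by move: p1; rewrite big_pred0 // => /eqP; rewrite eq_sym oner_eq0.
have ps0 : 0 < pDstar p := lt_le_trans (pDpos d0) (@le_maxD _ _ (pD p) d0).
have qpos : forall y, 0 < q y.
  move=> y; rewrite lt_neqAle q0 andbT; apply/eqP => qy0.
  have hz : forall d, p d y = 0.
    move=> d; apply/eqP; rewrite eq_le p0 andbT leNgt; apply/negP => hd.
    apply: (Hy y d); rewrite /ratio_deviates -qy0 ltxx /pYgD.
    by rewrite divr_gt0.
  have := pYpos y; rewrite /pY big1 ?ltxx //.
have key : forall y d, p d y <= (1 + eps) * q y * pDstar p.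
  move=> y d; have := Hy y d; rewrite /ratio_deviates qpos.
  move/negP; rewrite -leNgt => /ler_normlP [_ h].
  have h1 : pYgD p y d / q y <= 1 + eps by rewrite -lerBlDl.
  move: h1; rewrite ler_pdivrMr // /pYgD ler_pdivrMr //.
  move=> h2; apply: (le_trans h2).
  rewrite ler_wpM2l //; last exact: le_maxD.
  by rewrite mulr_ge0 // ?q0 // addr_ge0.
have : Pc p <= (1 + eps) * pDstar p.
  rewrite /Pc.
  apply: (@le_trans _ _ (\sum_y (1 + eps) * q y * pDstar p)).
    apply: ler_sum => y _.
    rewrite mulrC -ler_pdivlMr //; apply: maxD_le.
      by rewrite divr_ge0 ?mulr_ge0 ?q0 ?addr_ge0 // ltW.
    move=> d; rewrite /pDgY ler_pM2r ?invr_gt0 //; exact: key.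
  rewrite -mulr_suml -mulr_sumr q1 mulr1 lexx //.
rewrite -ler_pdivrMr // => h.
by move: hAdv; rewrite /Adv ltNge h.
Qed.
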